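(* Let $i=\lambda y.y$, and let $x$, $k$ be distinct variables. Then $\langle (\langle x\,i\rangle)\,(\mathcal{S}k.i)\rangle \simeq_{\mathrm{ctx}} \langle (\langle x\,i\rangle)\,((\langle x\,i\rangle)\,(\mathcal{S}k.i))\rangle$, but these two terms are not normal form bisimilar, i.e. $\langle (\langle x\,i\rangle)\,(\mathcal{S}k.i)\rangle \not\sim \langle (\langle x\,i\rangle)\,((\langle x\,i\rangle)\,(\mathcal{S}k.i))\rangle$.
   Context: The calculus $\lambda_{\mathcal S}$. Terms: $t ::= x \mid \lambda x.t \mid t\,t \mid \mathcal{S}k.t \mid \langle t\rangle$ ($\mathcal{S}$ is shift, $\langle\cdot\rangle$ is reset); values: $v ::= \lambda x.t \mid x$. Binders: $\lambda x.t$ binds $x$, $\mathcal{S}k.t$ binds $k$; terms up to $\alpha$-conversion; $\mathrm{fv}$, capture-avoiding substitution $t\{v/x\}$. Pure contexts $F ::= [\,] \mid v\,F \mid F\,t$; evaluation contexts $E ::= [\,] \mid v\,E \mid E\,t \mid \langle E\rangle$; general contexts $C ::= [\,] \mid \lambda x.C \mid t\,C \mid C\,t \mid \mathcal{S}k.C \mid \langle C\rangle$ (hole-filling may capture). Reduction: $E[(\lambda x.t)\,v] \to E[t\{v/x\}]$; $E[\langle F[\mathcal{S}k.t]\rangle] \to E[\langle t\{\lambda x.\langle F[x]\rangle/k\}\rangle]$ ($x\notin\mathrm{fv}(F)$); $E[\langle v\rangle]\to E[v]$. $t\Downarrow t'$ iff $t\to^*t'$ and $t'$ irreducible. Stuck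 term: not a value and irreducible; normal form: value or stuck; control stuck terms: $F[\mathcal{S}k.t]$; open stuck terms: $E[x\,v]$. Fresh: not free in the terms/contexts considered. Contextual equivalence $\simeq_{\mathrm{ctx}}$: $t_0\simeq_{\mathrm{ctx}}t_1$ iff for all contexts $C$ with $C[t_0],C[t_1]$ closed, $C[t_0]$ evaluates to a value iff... more precisely: $C[t_0]\Downarrow$ a value implies $C[t_1]\Downarrow$ a value, $C[t_0]\Downarrow$ a control stuck term implies $C[t_1]\Downarrow$ a control stuck term, and conversely. Normal form bisimilarity $\sim$. For $\mathcal R$ on terms, extend to evaluation contexts: $E_0\mathrel{\mathcal R}E_1$ iff either $E_0=E_0'[\langle F_0\rangle]$, $E_1=E_1'[\langle F_1\rangle]$ ($F_i$ pure) with $E_0'[x]\mathrel{\mathcal R}E_1'[x]$ and $\langle F_0[x]\rangle\mathrel{\mathcal R}\langle F_1[x]\rangle$ for fresh $x$, or $E_0=F_0$, $E_1=F_1$ pure with $F_0[x]\mathrel{\mathcal R}F_1[x]$ for fresh $x$. $v\mathbin{@}y$ is $x\,y$ if $v=x$ and $t\{y/x\}$ if $v=\lambda x.t$. $\mathcal R^{\mathrm{nf}}$ on normal forms: $v_0\mathrel{\mathcal R^{\mathrm{nf}}}v_1$ if $v_0\mathbin{@}x\mathrel{\mathcal R}v_1\mathbin{@}x$ ($x$ fresh); $F_0[\mathcal{S}k.t_0]\mathrel{\mathcal R^{\mathrm{nf}}}F_1[\mathcal{S}k.t_1]$ if $F_0\mathrel{\mathcal R}F_1$ and $\langle t_0\rangle\mathrel{\mathcal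 R}\langle t_1\rangle$; $E_0[x\,v_0]\mathrel{\mathcal R^{\mathrm{nf}}}E_1[x\,v_1]$ if $E_0\mathrel{\mathcal R}E_1$ and $v_0\mathrel{\mathcal R^{\mathrm{nf}}}v_1$. $\mathcal R$ is a normal form simulation if $t_0\mathrel{\mathcal R}t_1$, $t_0\Downarrow t_0'$ imply $t_1\Downarrow t_1'$ with $t_0'\mathrel{\mathcal R^{\mathrm{nf}}}t_1'$; a bisimulation if $\mathcal R$ and $\mathcal R^{-1}$ are simulations; $\sim$ is the largest normal form bisimulation. *)

(* Defs.v *)
(* The calculus lambda_S (shift/reset), locally nameless
   representation: bound variables are de Bruijn indices, free variables are
   named atoms.  Terms are thus identified up to alpha-conversion. *)
From Stdlib Require Import List Arith Relations.
Import ListNotations.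

Definition atom := nat.

(* raw locally-nameless terms; [lam t] binds bvar 0 in t (the lambda x),
   [shift t] binds bvar 0 in t (the continuation variable k of S k. t) *)
Inductive term : Type :=
| bvar  : nat -> term
| fvar  : atom -> term
| lam   : term -> term
| app   : term -> term -> term
| shift : term -> term
| reset : term -> term.

Fixpoint fv (t : term) : list atom :=
  match t with
  | bvar _ => []
  | fvar x => [x]
  | lam t | shift t | reset t => fv t
  | app t1 t2 => fv t1 ++ fv t2
  end.

Fixpoint lc_at (k : nat) (t : term) : Prop :=
  match t with
  | bvar i => i < k
  | fvar _ => True
  | lam t | shift t => lc_at (S k) t
  | reset t => lc_at k t
  | app t1 t2 => lc_at k t1 /\ lc_at k t2
  end.

Definition lc (t : term) : Prop := lc_at 0 t.

Definition closed (t : term) : Prop := lc t /\ fv t = [].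

Fixpoint open_rec (k : nat) (u : term) (t : term) : term :=
  match t with
  | bvar i => if Nat.eqb i k then u else bvar i
  | fvar x => fvar x
  | lam t => lam (open_rec (S k) u t)
  | shift t => shift (open_rec (S k) u t)
  | reset t => reset (open_rec k u t)
  | app t1 t2 => app (open_rec k u t1) (open_rec k u t2)
  end.
Definition open (t u : term) : term := open_rec 0 u t.

Fixpoint close_rec (k : nat) (x : atom) (t : term) : term :=
  match t with
  | bvar i => bvar i
  | fvar y => if Nat.eqb y x then bvar k else fvar y
  | lam t => lam (close_rec (S k) x t)
  | shift t => shift (close_rec (S k) x t)
  | reset t => reset (close_rec k x t)
  | app t1 t2 => app (close_rec k x t1) (close_rec k x t2)
  end.
Definition close (x : atom) (t : term) : term := close_rec 0 x t.

Definition nlam (x : atom) (t : term) : term := lam (close x t).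
Definition nshift (k : atom) (t : term) : term := shift (close k t).

Inductive val : Type :=
| VLam : term -> val
| VVar : atom -> val.

Definition val_term (v : val) : term :=
  match v with VLam b => lam b | VVar x => fvar x end.
Coercion val_term : val >-> term.

Definition is_value (t : term) : Prop := exists v : val, t = val_term v.

Inductive fctx : Type :=
| FHole : fctx
| FAppR : val -> fctx -> fctx
| FAppL : fctx -> term -> fctx.

Inductive ectx : Type :=
| EHole : ectx
| EAppR : val -> ectx -> ectx
| EAppL : ectx -> term -> ectx
| EReset : ectx -> ectx.

Fixpoint plugF (F : fctx) (t : term) : term :=
  match F with
  | FHole => t
  | FAppR v F => app (val_term v) (plugF F t)
  | FAppL F u => app (plugF F t) u
  end.

Fixpoint plugE (E : ectx) (t : term) : term :=
  match E with
  | EHole => t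
  | EAppR v E => app (val_term v) (plugE E t)
  | EAppL E u => app (plugE E t) u
  | EReset E => reset (plugE E t)
  end.

Fixpoint f2e (F : fctx) : ectx :=
  match F with
  | FHole => EHole
  | FAppR v F => EAppR v (f2e F)
  | FAppL F u => EAppL (f2e F) u
  end.

Fixpoint ecomp (E1 E2 : ectx) : ectx :=
  match E1 with
  | EHole => E2
  | EAppR v E => EAppR v (ecomp E E2)
  | EAppL E u => EAppL (ecomp E E2) u
  | EReset E => EReset (ecomp E E2)
  end.

Fixpoint fv_f (F : fctx) : list atom :=
  match F with
  | FHole => []
  | FAppR v F => fv (val_term v) ++ fv_f F
  | FAppL F u => fv_f F ++ fv u
  end.

Fixpoint fv_e (E : ectx) : list atom :=
  match E with
  | EHole => []
  | EAppR v E => fv (val_term v) ++ fv_e E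
  | EAppL E u => fv_e E ++ fv u
  | EReset E => fv_e E
  end.

(* reduction.  In the shift rule, lambda x.<F[x]> (x not in fv F) is the
   lambda whose body is <F[bvar 0]>. *)
Inductive step : term -> term -> Prop :=
| step_beta : forall (E : ectx) (b : term) (v : val),
    step (plugE E (app (lam b) v)) (plugE E (open b v))
| step_shift : forall (E : ectx) (F : fctx) (b : term),
    step (plugE E (reset (plugF F (shift b))))
         (plugE E (reset (open b (lam (reset (plugF F (bvar 0)))))))
| step_reset : forall (E : ectx) (v : val),
    step (plugE E (reset v)) (plugE E v).

Definition irreducible (t : term) : Prop := forall t', ~ step t t'.

Definition eval (t t' : term) : Prop :=
  clos_refl_trans term step t t' /\ irreducible t'.

Definition stuck (t : term) : Prop := ~ is_value t /\ irreducible t.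
Definition normal_form (t : term) : Prop := is_value t \/ stuck t.

Definition control_stuck (t : term) : Prop :=
  exists (F : fctx) (b : term), t = plugF F (shift b).
Definition open_stuck (t : term) : Prop :=
  exists (E : ectx) (x : atom) (v : val), t = plugE E (app (fvar x) v).

(* general contexts, with named binders; filling may capture *)
Inductive ctx : Type :=
| CHole : ctx
| CLam : atom -> ctx -> ctx
| CAppL : ctx -> term -> ctx
| CAppR : term -> ctx -> ctx
| CShift : atom -> ctx -> ctx
| CReset : ctx -> ctx.

Fixpoint fill (C : ctx) (t : term) : term :=
  match C with
  | CHole => t
  | CLam x C => nlam x (fill C t)
  | CAppL C u => app (fill C t) u
  | CAppR u C => app u (fill C t)
  | CShift k C => nshift k (fill C t)
  | CReset C => reset (fill C t)
  end.

Fixpoint ctx_wf (C : ctx) : Prop :=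
  match C with
  | CHole => True
  | CLam _ C | CShift _ C | CReset C => ctx_wf C
  | CAppL C u | CAppR u C => lc u /\ ctx_wf C
  end.

Definition evals_to_value (t : term) : Prop :=
  exists t', eval t t' /\ is_value t'.
Definition evals_to_control_stuck (t : term) : Prop :=
  exists t', eval t t' /\ control_stuck t'.

Definition ctx_equiv (t0 t1 : term) : Prop :=
  forall C : ctx, ctx_wf C -> closed (fill C t0) -> closed (fill C t1) ->
    (evals_to_value (fill C t0) <-> evals_to_value (fill C t1)) /\
    (evals_to_control_stuck (fill C t0) <-> evals_to_control_stuck (fill C t1)).

Definition val_at (v : val) (y : atom) : term :=
  match v with
  | VVar x => app (fvar x) (fvar y)
  | VLam b => open b (fvar y)
  end.

(* extension of R to evaluation contexts ("for fresh x" read as: for every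
   fresh x) *)
Definition ectx_rel (R : term -> term -> Prop) (E0 E1 : ectx) : Prop :=
  (exists (E0' E1' : ectx) (F0 F1 : fctx),
      E0 = ecomp E0' (EReset (f2e F0)) /\ E1 = ecomp E1' (EReset (f2e F1)) /\
      forall x : atom, ~ In x (fv_e E0) -> ~ In x (fv_e E1) ->
        R (plugE E0' (fvar x)) (plugE E1' (fvar x)) /\
        R (reset (plugF F0 (fvar x))) (reset (plugF F1 (fvar x))))
  \/
  (exists F0 F1 : fctx, E0 = f2e F0 /\ E1 = f2e F1 /\
      forall x : atom, ~ In x (fv_f F0) -> ~ In x (fv_f F1) ->
        R (plugF F0 (fvar x)) (plugF F1 (fvar x))).

Definition val_rel (R : term -> term -> Prop) (v0 v1 : val) : Prop :=
  forall x : atom, ~ In x (fv v0) -> ~ In x (fv v1) -> R (val_at v0 x) (val_at v1 x).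

Definition nf_rel (R : term -> term -> Prop) (t0 t1 : term) : Prop :=
  (exists v0 v1 : val, t0 = v0 /\ t1 = v1 /\ val_rel R v0 v1)
  \/
  (exists (F0 F1 : fctx) (b0 b1 : term),
      t0 = plugF F0 (shift b0) /\ t1 = plugF F1 (shift b1) /\
      ectx_rel R (f2e F0) (f2e F1) /\
      forall k : atom, ~ In k (fv b0) -> ~ In k (fv b1) ->
        R (reset (open b0 (fvar k))) (reset (open b1 (fvar k))))
  \/
  (exists (E0 E1 : ectx) (x : atom) (v0 v1 : val),
      t0 = plugE E0 (app (fvar x) v0) /\ t1 = plugE E1 (app (fvar x) v1) /\
      ectx_rel R E0 E1 /\ val_rel R v0 v1).

Definition nf_simulation (R : term -> term -> Prop) : Prop :=
  forall t0 t1 t0', R t0 t1 -> eval t0 t0' ->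
    exists t1', eval t1 t1' /\ nf_rel R t0' t1'.

Definition nf_bisimulation (R : term -> term -> Prop) : Prop :=
  nf_simulation R /\ nf_simulation (fun a b => R b a).

Definition nf_bisimilar (t0 t1 : term) : Prop :=
  exists R, nf_bisimulation R /\ R t0 t1.

(* Main.v *)
From Stdlib Require Import List Arith Relations Lia.
Import ListNotations.
Require Import Defs.

Definition is_val (t : term) : Prop :=
  match t with lam _ | fvar _ => True | _ => False end.

Definition I0 := lam (bvar 0).
Definition S0 := shift I0.

Definition rstep (r r1 : term) : Prop :=
  (exists b v, r = app (lam b) v /\ is_val v /\ r1 = open b v) \/
  (exists F b, r = reset (plugF F (shift b)) /\
      r1 = reset (open b (lam (reset (plugF F (bvar 0)))))) \/
  (exists v, r = reset v /\ is_val v /\ r1 = v).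

Lemma is_val_val : forall v : val, is_val (val_term v).
Proof. destruct v; simpl; auto. Qed.

Lemma is_val_ex : forall t, is_val t -> exists v : val, t = val_term v.
Proof. destruct t; simpl; intros H; try contradiction.
  exists (VVar a); reflexivity. exists (VLam t); reflexivity. Qed.

Lemma step_iff : forall t t1, step t t1 <->
  exists E r r1, t = plugE E r /\ t1 = plugE E r1 /\ rstep r r1.
Proof.
  split.
  - intros H; destruct H.
    + exists E, (app (lam b) v), (open b v); repeat split; auto.
      left; exists b, v; split; auto; split; auto; apply is_val_val.
    + eexists E, _, _; repeat split; auto. right; left; eauto.
    + exists E, (reset v), (val_term v); repeat split; auto.
      right; right; exists v; split; auto; split; auto; apply is_val_val.
  - intros (E & r & r1 & -> & -> & [(b & v & -> & Hv & ->)|[(F&b&->&->)|(v&->&Hv&->)]]).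
    + destruct (is_val_ex _ Hv) as [v' ->]; constructor.
    + constructor.
    + destruct (is_val_ex _ Hv) as [v' ->]; constructor.
Qed.

Lemma plugE_ecomp : forall E1 E2 t, plugE (ecomp E1 E2) t = plugE E1 (plugE E2 t).
Proof. induction E1; intros; simpl; try rewrite IHE1; auto. Qed.

Lemma step_ctx : forall E t t1, step t t1 -> step (plugE E t) (plugE E t1).
Proof.
  intros E t t1 H. apply step_iff in H as (E' & r & r1 & -> & -> & Hr).
  apply step_iff. exists (ecomp E E'), r, r1. rewrite !plugE_ecomp. auto.
Qed.

Lemma steps_ctx : forall E t t1, clos_refl_trans term step t t1 ->
  clos_refl_trans term step (plugE E t) (plugE E t1).
Proof.
  intros E t t1 H; induction H.
  - apply rt_step, step_ctx; auto.
  - apply rt_refl.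
  - eapply rt_trans; eauto.
Qed.

Inductive nsteps : nat -> term -> term -> Prop :=
| ns0 : forall t, nsteps 0 t t
| nsS : forall n t t1 t2, step t t1 -> nsteps n t1 t2 -> nsteps (S n) t t2.

Lemma nsteps_trans : forall n m a b c, nsteps n a b -> nsteps m b c -> nsteps (n+m) a c.
Proof. induction 1; intros; simpl; auto. econstructor; eauto. Qed.

Lemma nsteps_snoc : forall n a b c, nsteps n a b -> step b c -> nsteps (S n) a c.
Proof. intros. replace (S n) with (n + 1) by lia. eapply nsteps_trans; eauto.
  econstructor; eauto; constructor. Qed.

Lemma rt_nsteps : forall a b, clos_refl_trans term step a b -> exists n, nsteps n a b.
Proof.
  intros a b H; apply clos_rt_rt1n in H; induction H.
  - exists 0; constructor.
  - destruct IHclos_refl_trans_1n as [n Hn]; exists (S n); econstructor; eauto.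
Qed.

Lemma nsteps_rt : forall n a b, nsteps n a b -> clos_refl_trans term step a b.
Proof. induction 1. apply rt_refl. eapply rt_trans; eauto. apply rt_step; auto. Qed.

Lemma plugE_val : forall E r, is_val (plugE E r) -> E = EHole /\ is_val r.
Proof. destruct E; simpl; intros; try contradiction; auto. Qed.

Lemma rstep_not_val : forall r r1, rstep r r1 -> is_val r -> False.
Proof. intros r r1 [(b&v&->&_)|[(F&b&->&_)|(v&->&_)]]; simpl; auto. Qed.

Lemma val_irred : forall t, is_val t -> irreducible t.
Proof.
  intros t Hv t1 Hs. apply step_iff in Hs as (E&r&r1&->&->&Hr).
  apply plugE_val in Hv as [-> Hv]. eapply rstep_not_val; eauto.
Qed.

Lemma plugF_shift_not_val : forall F b, ~ is_val (plugF F (shift b)).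
Proof. destruct F; simpl; auto. Qed.

Lemma cs_irred : forall F b, irreducible (plugF F (shift b)).
Proof.
  intros F b t1 Hs. apply step_iff in Hs as (E&r&r1&Heq&_&Hr). clear t1.
  revert E Heq. induction F; intros E Heq.
  - destruct E; simpl in Heq; try discriminate. subst.
    destruct Hr as [(?&?&?&_)|[(?&?&?&_)|(?&?&_)]]; discriminate.
  - destruct E; simpl in Heq; try discriminate.
    + subst. destruct Hr as [(b'&v'&Heq&Hv&_)|[(?&?&?&_)|(?&?&_)]]; try discriminate.
      injection Heq as Ha Hb. subst. eapply plugF_shift_not_val; exact Hv.
    + injection Heq as Ha Hb. eapply IHF; eauto.
    + injection Heq as Ha Hb. assert (Hv : is_val (plugE E r)) by (rewrite <- Ha; apply is_val_val).
      apply plugE_val in Hv as [_ Hv]. eapply rstep_not_val; eauto.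
  - destruct E; simpl in Heq; try discriminate.
    + subst. destruct Hr as [(b'&v'&Heq&Hv&_)|[(?&?&?&_)|(?&?&_)]]; try discriminate.
      injection Heq; intros; subst. destruct F; discriminate.
    + injection Heq; intros; subst. destruct v; simpl in H0; destruct F; discriminate.
    + injection Heq; intros; subst. eapply IHF; eauto.
Qed.

Lemma irred_rt : forall a b, irreducible a -> clos_refl_trans term step a b -> b = a.
Proof.
  intros a b Ha H; apply clos_rt_rt1n in H; destruct H; auto.
  exfalso; eapply Ha; eauto.
Qed.

(* reducts of reset-rooted terms *)
Definition rv (t : term) : Prop :=
  match t with reset _ | lam _ | fvar _ => True | _ => False end.

Lemma rv_step : forall t t1, rv t -> step t t1 -> rv t1.
Proof.
  intros t t1 Hr Hs. apply step_iff in Hs as (E&r&r1&->&->&Hr').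
  destruct E; simpl in *; try contradiction; auto.
  destruct Hr' as [(b&v&->&_)|[(F&b&->&->)|(v&->&Hv&->)]]; simpl in *; try contradiction; auto.
  destruct v; simpl in *; try contradiction; auto.
Qed.

Lemma rv_nsteps : forall n t t1, rv t -> nsteps n t t1 -> rv t1.
Proof. induction 2; auto. apply IHnsteps. eapply rv_step; eauto. Qed.

Lemma rv_rt : forall t t1, rv t -> clos_refl_trans term step t t1 -> rv t1.
Proof. intros. destruct (rt_nsteps _ _ H0) as [n Hn]. eapply rv_nsteps; eauto. Qed.

Lemma rv_plugF_shift : forall F b, rv (plugF F (shift b)) -> False.
Proof. destruct F; simpl; auto. Qed.
Inductive R0 : term -> term -> Prop :=
| R0_bvar n : R0 (bvar n) (bvar n)
| R0_fvar x : R0 (fvar x) (fvar x)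
| R0_lam t t' : R0 t t' -> R0 (lam t) (lam t')
| R0_app t1 t1' t2 t2' : R0 t1 t1' -> R0 t2 t2' -> R0 (app t1 t2) (app t1' t2')
| R0_shift t t' : R0 t t' -> R0 (shift t) (shift t')
| R0_reset t t' : R0 t t' -> R0 (reset t) (reset t')
| R0_base a a' a'' : R0 a a' -> R0 a a'' ->
    R0 (reset (app (reset (app a I0)) S0))
       (reset (app (reset (app a' I0)) (app (reset (app a'' I0)) S0))).

Hint Constructors R0 : core.

Lemma R0_refl : forall t, R0 t t.
Proof. induction t; auto. Qed.
Hint Resolve R0_refl : core.

Lemma R0_open : forall t t', R0 t t' -> forall u u', R0 u u' -> forall n,
  R0 (open_rec n u t) (open_rec n u' t').
Proof.
  induction 1; intros u u' Hu n0; simpl; auto.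
  destruct (Nat.eqb n n0); auto.
Qed.

Lemma R0_close : forall t t', R0 t t' -> forall n x,
  R0 (close_rec n x t) (close_rec n x t').
Proof.
  induction 1; intros n0 y; simpl; auto.
Qed.

Lemma R0_val : forall t t', R0 t t' -> is_val t -> is_val t'.
Proof. destruct 1; simpl; auto. Qed.
Lemma R0_val' : forall t t', R0 t t' -> is_val t' -> is_val t.
Proof. destruct 1; simpl; auto. Qed.

Lemma R0_cs : forall F b t', R0 (plugF F (shift b)) t' ->
  exists F' b', t' = plugF F' (shift b') /\ R0 b b' /\
    forall z z', R0 z z' -> R0 (plugF F z) (plugF F' z').
Proof.
  induction F; simpl; intros b t' H.
  - inversion H; subst. exists FHole, t'0; simpl; auto.
  - inversion H; subst.
    destruct (IHF _ _ H4) as (F'&b'&->&Hb&Hz).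
    destruct (is_val_ex t1') as [v' ->]. eapply R0_val; eauto; apply is_val_val.
    exists (FAppR v' F'), b'; simpl; auto.
  - inversion H; subst.
    destruct (IHF _ _ H2) as (F'&b'&->&Hb&Hz).
    exists (FAppL F' t2'), b'; simpl; auto.
Qed.

Lemma R0_cs' : forall F b tt, R0 tt (plugF F (shift b)) ->
  exists F0 b0, tt = plugF F0 (shift b0) /\ R0 b0 b /\
    forall z z', R0 z z' -> R0 (plugF F0 z) (plugF F z').
Proof.
  induction F; simpl; intros b tt H.
  - inversion H; subst. exists FHole, t; simpl; auto.
  - inversion H; subst.
    destruct (IHF _ _ H4) as (F'&b'&->&Hb&Hz).
    destruct (is_val_ex t1) as [v' ->]. eapply R0_val'; eauto; apply is_val_val.
    exists (FAppR v' F'), b'; simpl; auto.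
  - inversion H; subst.
    destruct (IHF _ _ H3) as (F'&b'&->&Hb&Hz).
    exists (FAppL F' t2), b'; simpl; auto.
Qed.

Lemma plugF_base_absurd : forall F b a, plugF F (shift b) = app (reset (app a I0)) S0 -> False.
Proof.
  intros F b a H. destruct F; simpl in H; try discriminate; injection H as H1 H2.
  - destruct v; discriminate.
  - destruct F; discriminate.
Qed.

Lemma plugF_app_reset : forall F b X Y, plugF F (shift b) = app (reset X) Y -> False.
Proof.
  intros F b X Y H. destruct F; simpl in H; try discriminate; injection H as H1 H2.
  - destruct v; discriminate.
  - destruct F; discriminate.
Qed.

Lemma R0_rstep : forall r r' r1, R0 r r' -> rstep r r1 ->
  exists r1', rstep r' r1' /\ R0 r1 r1'.
Proof.
  intros r r' r1 H [(b&v&->&Hv&->)|[(F&b&->&->)|(v&->&Hv&->)]].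
  - inversion H; subst. inversion H2; subst.
    exists (open t' t2'); split. left; exists t', t2'; split; auto; split; auto.
    eapply R0_val; eauto. apply R0_open; auto.
  - inversion H; subst.
    + destruct (R0_cs _ _ _ H1) as (F'&b'&->&Hb&Hz).
      eexists; split. right; left; eauto.
      constructor. apply R0_open; auto.
    + exfalso; eapply plugF_base_absurd; eauto.
  - inversion H; subst.
    + exists t'; split. right; right; exists t'; split; auto; split; auto.
      eapply R0_val; eauto. auto.
    + simpl in Hv; contradiction.
Qed.

Lemma R0_rstep' : forall r r' r1', R0 r r' -> rstep r' r1' ->
  exists r1, rstep r r1 /\ R0 r1 r1'.
Proof.
  intros r r' r1' H [(b&v&->&Hv&->)|[(F&b&->&->)|(v&->&Hv&->)]].
  - inversion H; subst. inversion H3; subst.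
    exists (open t t2); split. left; exists t, t2; split; auto; split; auto.
    eapply R0_val'; eauto. apply R0_open; auto.
  - inversion H; subst.
    + destruct (R0_cs' _ _ _ H2) as (F'&b'&->&Hb&Hz).
      eexists; split. right; left; eauto.
      constructor. apply R0_open; auto.
    + exfalso. symmetry in H0. eapply plugF_app_reset; eauto.
  - inversion H; subst.
    + exists t; split. right; right; exists t; split; auto; split; auto.
      eapply R0_val'; eauto. auto.
    + simpl in Hv; contradiction.
Qed.

Inductive RF (K : nat) : term -> term -> Prop :=
| RF_0 t t' : R0 t t' -> RF K t t'
| RF_appL t1 t1' t2 t2' : RF K t1 t1' -> R0 t2 t2' -> RF K (app t1 t2) (app t1' t2')
| RF_appR v v' t t' : is_val v -> R0 v v' -> RF K t t' -> RF K (app v t) (app v' t')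
| RF_reset t t' : RF K t t' -> RF K (reset t) (reset t')
| RF_base k a a'' p p' : R0 a a'' -> nsteps k (reset (app a I0)) p -> k <= K -> RF K p p' ->
    RF K (reset (app p S0)) (reset (app p' (app (reset (app a'' I0)) S0))).

Lemma RF_val : forall K t t', RF K t t' -> is_val t -> R0 t t'.
Proof. destruct 1; simpl; intros; try contradiction; auto. Qed.

Lemma RF_cs : forall K F b t', RF K (plugF F (shift b)) t' -> R0 (plugF F (shift b)) t'.
Proof.
  induction F; simpl; intros b t' H.
  - inversion H; subst; auto.
  - inversion H; subst; auto; constructor; auto; eapply RF_val; eauto; apply is_val_val.
  - inversion H; subst; auto; try (constructor; auto; fail).
    exfalso; eapply plugF_shift_not_val; eauto.
Qed.

Definition PK (K : nat) : Prop := forall a a'' k w, R0 a a'' ->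
  nsteps k (reset (app a I0)) w -> k <= K -> is_val w ->
  exists w'', clos_refl_trans term step (reset (app a'' I0)) w'' /\ is_val w''.

Definition rtc := clos_refl_trans term step.

Lemma rstep_step : forall r r1, rstep r r1 -> step r r1.
Proof. intros. apply step_iff. exists EHole, r, r1; auto. Qed.

Lemma root_R0 : forall K r r1 t', rstep r r1 -> R0 r t' ->
  exists t1', rtc t' t1' /\ RF K r1 t1'.
Proof.
  intros. destruct (R0_rstep _ _ _ H0 H) as (r1'&Hs&HR).
  exists r1'; split. apply rt_step, rstep_step; auto. constructor; auto.
Qed.

Lemma rv_reset_app : forall k a p, nsteps k (reset a) p -> rv p.
Proof. intros. eapply rv_nsteps; eauto. simpl; auto. Qed.

Lemma root_F : forall K r r1 t', PK K -> rstep r r1 -> RF K r t' ->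
  exists t1', rtc t' t1' /\ RF (S K) r1 t1'.
Proof.
  intros K r r1 t' HP Hr H. destruct H.
  - eapply root_R0; eauto.
  - destruct Hr as [(b&v&Heq&Hv&->)|[(F&b&Heq&->)|(v&Heq&Hv&->)]]; try discriminate.
    injection Heq as -> ->. eapply root_R0.
    left; exists b, v; eauto. constructor; auto. eapply RF_val; eauto. simpl; auto.
  - destruct Hr as [(b&v0&Heq&Hv&->)|[(F&b&Heq&->)|(v0&Heq&Hv&->)]]; try discriminate.
    injection Heq as -> ->. eapply root_R0.
    left; exists b, v0; eauto. constructor; auto. eapply RF_val; eauto.
  - destruct Hr as [(b&v0&Heq&Hv&->)|[(F&b&Heq&->)|(v0&Heq&Hv&->)]]; try discriminate.
    + injection Heq as ->. eapply root_R0. right; left; eauto.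
      constructor. eapply RF_cs; eauto.
    + injection Heq as ->. eapply root_R0. right; right; eauto.
      constructor. eapply RF_val; eauto.
  - destruct Hr as [(b&v0&Heq&Hv&->)|[(F&b&Heq&->)|(v0&Heq&Hv&->)]]; try discriminate.
    + injection Heq as Heq.
      assert (Hrv : rv p) by (eapply rv_reset_app; eauto).
      destruct F as [|v F|F u]; simpl in Heq; try discriminate.
      * injection Heq as Hp Hs. destruct F; simpl in Hs; try discriminate.
        injection Hs as Hb. subst b p.
        assert (Hw' : R0 v p') by (eapply RF_val; eauto; apply is_val_val).
        assert (Hv' : is_val p') by (eapply R0_val; eauto; apply is_val_val).
        destruct (is_val_ex _ Hv') as [v' ->].
        destruct (HP a a'' k v H H0 H1 (is_val_val v)) as (w''&Hq&Hw'').
        destruct (is_val_ex _ Hw'') as [v'' ->].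
        exists (reset I0); split.
        -- eapply rt_trans.
           apply (steps_ctx (EReset (EAppR v' (EAppL EHole S0))) _ _ Hq).
           apply rt_step. simpl.
           pose proof (step_shift EHole (FAppR v' (FAppR v'' FHole)) I0) as Hst.
           simpl in Hst. exact Hst.
        -- simpl. constructor. auto.
      * injection Heq as Hp Hs. subst p. exfalso; eapply rv_plugF_shift; eauto.
    + injection Heq as Heq. subst v0. simpl in Hv. contradiction.
Qed.

Fixpoint esize (E : ectx) : nat :=
  match E with
  | EHole => 0
  | EAppR _ E | EAppL E _ | EReset E => S (esize E)
  end.

Lemma rstep_plugE_val : forall E r r1, rstep r r1 -> is_val (plugE E r) -> False.
Proof. intros. apply plugE_val in H0 as [_ H0]. eapply rstep_not_val; eauto. Qed.

Lemma steps_appR : forall v t t1, is_val v -> rtc t t1 -> rtc (app v t) (app v t1).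
Proof. intros. destruct (is_val_ex _ H) as [v' ->]. apply (steps_ctx (EAppR v' EHole)); auto. Qed.
Lemma steps_appL : forall u t t1, rtc t t1 -> rtc (app t u) (app t1 u).
Proof. intros. apply (steps_ctx (EAppL EHole u)); auto. Qed.
Lemma steps_reset : forall t t1, rtc t t1 -> rtc (reset t) (reset t1).
Proof. intros. apply (steps_ctx (EReset EHole)); auto. Qed.

Lemma rstep_not_shift : forall r r1 b, rstep r r1 -> r = shift b -> False.
Proof. intros r r1 b [(?&?&->&_)|[(?&?&->&_)|(?&->&_)]]; discriminate. Qed.

Lemma rstep_not_appS0 : forall r r1 p, rstep r r1 -> r = app p S0 -> False.
Proof. intros r r1 p [(?&?&->&Hv&_)|[(?&?&->&_)|(?&->&_)]] H; try discriminate.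
  injection H as _ H; subst; simpl in Hv; auto. Qed.

Lemma OS : forall n E, esize E < n -> forall r r1, rstep r r1 -> forall K t', PK K ->
  RF K (plugE E r) t' -> exists t1', rtc t' t1' /\ RF (S K) (plugE E r1) t1'.
Proof.
  induction n; intros E Hn r r1 Hr K t' HP H; [lia|].
  destruct E as [|v E0|E0 u|E0]; simpl in *.
  - eapply root_F; eauto.
  -
    inversion H; subst.
    + inversion H0; subst.
      destruct (IHn E0 ltac:(lia) r r1 Hr K _ HP ltac:(apply RF_0; eassumption)) as (X1&Hs&HX).
      exists (app t1' X1); split.
      apply steps_appR; auto. eapply R0_val; eauto; apply is_val_val.
      apply RF_appR; auto. apply is_val_val.
    + assert (R0 v t1') by (eapply RF_val; eauto; apply is_val_val).
      destruct (IHn E0 ltac:(lia) r r1 Hr K _ HP ltac:(apply RF_0; eassumption)) as (X1&Hs&HX).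
      exists (app t1' X1); split.
      apply steps_appR; auto. eapply R0_val; eauto; apply is_val_val.
      apply RF_appR; auto. apply is_val_val.
    + destruct (IHn E0 ltac:(lia) r r1 Hr K _ HP ltac:(eassumption)) as (X1&Hs&HX).
      exists (app v' X1); split.
      apply steps_appR; auto. eapply R0_val; eauto.
      apply RF_appR; auto.
  -
    inversion H; subst.
    + inversion H0; subst.
      destruct (IHn E0 ltac:(lia) r r1 Hr K _ HP ltac:(apply RF_0; eassumption)) as (X1&Hs&HX).
      exists (app X1 t2'); split. apply steps_appL; auto. apply RF_appL; auto.
    + destruct (IHn E0 ltac:(lia) r r1 Hr K _ HP ltac:(eassumption)) as (X1&Hs&HX).
      exists (app X1 t2'); split. apply steps_appL; auto. apply RF_appL; auto.
    + exfalso; eapply rstep_plugE_val; eauto.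
  -
    inversion H; subst.
    + inversion H0; subst.
      * destruct (IHn E0 ltac:(lia) r r1 Hr K _ HP ltac:(apply RF_0; eassumption)) as (X1&Hs&HX).
        exists (reset X1); split. apply steps_reset; auto. apply RF_reset; auto.
      *
        destruct E0 as [|v E1|E1 u|E1]; simpl in *; try discriminate;
        match goal with Heq : app (reset (app _ I0)) S0 = _ |- _ => rename Heq into HE end.
        -- exfalso; eapply rstep_not_appS0; eauto.
        -- injection HE as HE2 _. destruct v; discriminate.
        -- injection HE as HE2 Hu; subst u.
           assert (HR : R0 (reset (app a I0)) (reset (app a' I0))) by auto.
           rewrite HE2 in HR.
           destruct (IHn E1 ltac:(lia) r r1 Hr K _ HP (RF_0 _ _ _ HR)) as (X1&Hs&HX).
           eexists; split.
           apply steps_reset, steps_appL. exact Hs.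
           eapply RF_base with (k := 1); eauto; [|lia].
           rewrite HE2. apply nsS with (plugE E1 r1); [apply step_iff; exists E1, r, r1; auto | constructor].
    + destruct (IHn E0 ltac:(lia) r r1 Hr K _ HP ltac:(eassumption)) as (X1&Hs&HX).
      exists (reset X1); split. apply steps_reset; auto. apply RF_reset; auto.
    + destruct E0 as [|v E1|E1 u|E1]; simpl in *; try discriminate;
      match goal with Heq : app _ S0 = _ |- _ => rename Heq into H0 end.
      * exfalso; eapply rstep_not_appS0; eauto.
      * injection H0 as Hv H0. subst p. destruct E1; simpl in H0; try discriminate.
        exfalso; eapply rstep_not_shift; eauto.
      * injection H0 as H0 Hu. subst u.
        destruct (IHn E1 ltac:(lia) r r1 Hr K p' HP ltac:(rewrite <- H0; eassumption)) as (X1&Hs&HX).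
        eexists; split.
        apply steps_reset, steps_appL. exact Hs.
        eapply RF_base with (k := S k); eauto; [|lia].
        eapply nsteps_snoc; eauto. rewrite H0. apply step_iff; exists E1, r, r1; auto.
Qed.

Definition target (r : term) : Prop := is_val r \/ exists F b, r = plugF F (shift b).

Lemma RF_target : forall K r t', RF K r t' -> target r -> R0 r t'.
Proof.
  intros K r t' H [Hv|(F&b&->)]. eapply RF_val; eauto. eapply RF_cs; eauto.
Qed.

Lemma FW : forall N n K t t' r, K + n <= N -> RF K t t' -> nsteps n t r -> target r ->
  exists r', rtc t' r' /\ R0 r r'.
Proof.
  intro N. induction N as [N IHN] using lt_wf_ind.
  intro n. induction n as [|m IHm]; intros K t t' r Hle H Hs Ht.
  - inversion Hs; subst. exists t'; split. apply rt_refl. eapply RF_target; eauto.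
  - inversion Hs as [|? ? t1 ? Hst Hrest]; subst.
    apply step_iff in Hst as (E&r0&r1&->&->&Hr).
    assert (HP : PK K).
    { intros a a'' k w Ha Hn Hk Hw.
      destruct (IHN k ltac:(lia) k 0 _ _ w ltac:(lia)
                 (RF_0 0 _ _ (R0_reset _ _ (R0_app _ _ _ _ Ha (R0_refl I0)))) Hn
                 (or_introl Hw)) as (w''&Hw1&Hw2).
      exists w''; split; auto. eapply R0_val; eauto. }
    destruct (OS (S (esize E)) E ltac:(lia) r0 r1 Hr K t' HP H) as (t1'&Hs1&H1).
    destruct (IHm (S K) _ t1' r ltac:(lia) H1 Hrest Ht) as (r'&Hr'&HR).
    exists r'; split; auto. eapply rt_trans; eauto.
Qed.

Inductive RB : term -> term -> Prop :=
| RB_0 t t' : R0 t t' -> RB t t'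
| RB_appL t1 t1' t2 t2' : RB t1 t1' -> R0 t2 t2' -> RB (app t1 t2) (app t1' t2')
| RB_appR v v' t t' : is_val v' -> R0 v v' -> RB t t' -> RB (app v t) (app v' t')
| RB_reset t t' : RB t t' -> RB (reset t) (reset t')
| RB_base p p' q : RB p p' -> rv p' -> rv q ->
    RB (reset (app p S0)) (reset (app p' (app q S0))).

Lemma RB_val : forall t t', RB t t' -> is_val t' -> R0 t t'.
Proof. destruct 1; simpl; intros; try contradiction; auto. Qed.

Lemma RB_cs : forall F b tt, RB tt (plugF F (shift b)) -> R0 tt (plugF F (shift b)).
Proof.
  induction F; simpl; intros b tt H.
  - inversion H; subst; auto.
  - inversion H; subst; auto; constructor; auto; eapply RB_val; eauto; apply is_val_val.
  - inversion H; subst; auto; try (constructor; auto; fail).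
    exfalso; eapply plugF_shift_not_val; eauto.
Qed.

Lemma root_R0' : forall r r' r1', rstep r' r1' -> R0 r r' ->
  exists t1, rtc r t1 /\ RB t1 r1'.
Proof.
  intros. destruct (R0_rstep' _ _ _ H0 H) as (r1&Hs&HR).
  exists r1; split. apply rt_step, rstep_step; auto. constructor; auto.
Qed.

Lemma root_B : forall r' r1' tt, rstep r' r1' -> RB tt r' ->
  exists t1, rtc tt t1 /\ RB t1 r1'.
Proof.
  intros r' r1' tt Hr H. destruct H.
  - eapply root_R0'; eauto.
  - destruct Hr as [(b&v&Heq&Hv&->)|[(F&b&Heq&->)|(v&Heq&Hv&->)]]; try discriminate.
    injection Heq as -> ->. eapply root_R0'.
    left; exists b, v; eauto. constructor; auto. eapply RB_val; eauto. simpl; auto.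
  - destruct Hr as [(b&v0&Heq&Hv&->)|[(F&b&Heq&->)|(v0&Heq&Hv&->)]]; try discriminate.
    injection Heq as -> ->. eapply root_R0'.
    left; exists b, v0; eauto. constructor; auto. eapply RB_val; eauto.
  - destruct Hr as [(b&v0&Heq&Hv&->)|[(F&b&Heq&->)|(v0&Heq&Hv&->)]]; try discriminate.
    + injection Heq as ->. eapply root_R0'. right; left; eauto.
      constructor. eapply RB_cs; eauto.
    + injection Heq as ->. eapply root_R0'. right; right; eauto.
      constructor. eapply RB_val; eauto.
  - destruct Hr as [(b&v0&Heq&Hv&->)|[(F&b&Heq&->)|(v0&Heq&Hv&->)]]; try discriminate.
    + injection Heq as Heq.
      destruct F as [|v F|F u]; simpl in Heq; try discriminate.
      * injection Heq as Hp Hs. subst p'.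
        destruct F as [|v2 F|F u]; simpl in Hs; try discriminate.
        -- injection Hs as Hq Hs. subst q.
           destruct F; simpl in Hs; try discriminate.
           injection Hs as Hb. subst b.
           assert (Hw : R0 p v) by (eapply RB_val; eauto; apply is_val_val).
           assert (Hv' : is_val p) by (eapply R0_val'; eauto; apply is_val_val).
           destruct (is_val_ex _ Hv') as [pv ->].
           exists (reset I0); split.
           ++ apply rt_step.
              pose proof (step_shift EHole (FAppR pv FHole) I0) as Hst.
              simpl in Hst. exact Hst.
           ++ simpl. constructor. auto.
        -- injection Hs as Hq Hs. subst q. exfalso; eapply rv_plugF_shift; eauto.
      * injection Heq as Hp Hs. subst p'. exfalso; eapply rv_plugF_shift; eauto.
    + injection Heq as Heq. subst v0. simpl in Hv. contradiction.
Qed.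

Lemma OSB : forall n E, esize E < n -> forall r' r1', rstep r' r1' -> forall tt,
  RB tt (plugE E r') -> exists t1, rtc tt t1 /\ RB t1 (plugE E r1').
Proof.
  induction n; intros E Hn r r1 Hr tt H; [lia|].
  destruct E as [|v E0|E0 u|E0]; simpl in *.
  - eapply root_B; eauto.
  - inversion H; subst.
    + inversion H0; subst.
      destruct (IHn E0 ltac:(lia) r r1 Hr _ ltac:(apply RB_0; eassumption)) as (X1&Hs&HX).
      eexists; split.
      apply steps_appR; [|exact Hs]. eapply R0_val'; eauto; apply is_val_val.
      apply RB_appR; auto. apply is_val_val.
    + assert (R0 t1 v) by (eapply RB_val; eauto; apply is_val_val).
      destruct (IHn E0 ltac:(lia) r r1 Hr _ ltac:(apply RB_0; eassumption)) as (X1&Hs&HX).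
      eexists; split.
      apply steps_appR; [|exact Hs]. eapply R0_val'; eauto; apply is_val_val.
      apply RB_appR; auto. apply is_val_val.
    + destruct (IHn E0 ltac:(lia) r r1 Hr _ ltac:(eassumption)) as (X1&Hs&HX).
      eexists; split.
      apply steps_appR; [|exact Hs]. eapply R0_val'; eauto.
      apply RB_appR; auto.
  - inversion H; subst.
    + inversion H0; subst.
      destruct (IHn E0 ltac:(lia) r r1 Hr _ ltac:(apply RB_0; eassumption)) as (X1&Hs&HX).
      eexists; split. apply steps_appL; exact Hs. apply RB_appL; auto.
    + destruct (IHn E0 ltac:(lia) r r1 Hr _ ltac:(eassumption)) as (X1&Hs&HX).
      eexists; split. apply steps_appL; exact Hs. apply RB_appL; auto.
    + exfalso; eapply rstep_plugE_val; eauto.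
  - inversion H; subst.
    + inversion H0; subst.
      * destruct (IHn E0 ltac:(lia) r r1 Hr _ ltac:(apply RB_0; eassumption)) as (X1&Hs&HX).
        eexists; split. apply steps_reset; exact Hs. apply RB_reset; auto.
      * destruct E0 as [|v E1|E1 u|E1]; simpl in *; try discriminate;
        match goal with Heq : app (reset (app _ I0)) (app _ S0) = _ |- _ => rename Heq into HE end.
        -- exfalso. destruct Hr as [(b&v&Heq&Hv&_)|[(?&?&?&_)|(?&?&_)]]; subst; try discriminate.
        -- injection HE as HE2 _. destruct v; discriminate.
        -- injection HE as HE2 Hu. subst u.
           assert (HR : R0 (reset (app a I0)) (reset (app a' I0))) by auto.
           rewrite HE2 in HR.
           destruct (IHn E1 ltac:(lia) r r1 Hr _ (RB_0 _ _ HR)) as (X1&Hs&HX).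
           eexists; split.
           apply steps_reset, steps_appL. exact Hs.
           apply RB_base; auto; [|simpl; auto].
           apply (rv_step (plugE E1 r)). rewrite <- HE2; simpl; auto.
           apply step_iff; exists E1, r, r1; eauto.
    + destruct (IHn E0 ltac:(lia) r r1 Hr _ ltac:(eassumption)) as (X1&Hs&HX).
      eexists; split. apply steps_reset; exact Hs. apply RB_reset; auto.
    + destruct E0 as [|v E1|E1 u|E1]; simpl in *; try discriminate;
      match goal with Heq : app _ (app _ S0) = _ |- _ => rename Heq into HE end.
      * exfalso. destruct Hr as [(b&v&Heq&Hv&_)|[(?&?&?&_)|(?&?&_)]]; subst; try discriminate.
        injection HE as _ HE. subst v. simpl in Hv. auto.
      * injection HE as Hv HE. subst p'.
        destruct E1 as [|v2 E2|E2 u|E2]; simpl in *; try discriminate.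
        -- exfalso; eapply rstep_not_appS0; eauto.
        -- injection HE as _ HE. destruct E2; simpl in HE; try discriminate.
           exfalso; eapply rstep_not_shift; eauto.
        -- injection HE as HE Hu. subst u q.
           exists (reset (app p S0)); split. apply rt_refl.
           apply RB_base; auto.
           apply (rv_step (plugE E2 r)). eassumption. apply step_iff; exists E2, r, r1; eauto.
      * injection HE as HE Hu. subst u p'.
        destruct (IHn E1 ltac:(lia) r r1 Hr _ ltac:(eassumption)) as (X1&Hs&HX).
        eexists; split.
        apply steps_reset, steps_appL. exact Hs.
        apply RB_base; auto.
        apply (rv_step (plugE E1 r)). eassumption. apply step_iff; exists E1, r, r1; eauto.
Qed.

Lemma RB_target : forall r t, RB t r -> target r -> R0 t r.
Proof.
  intros r t H [Hv|(F&b&->)]. eapply RB_val; eauto. eapply RB_cs; eauto.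
Qed.

Lemma BW : forall n t t' r', RB t t' -> nsteps n t' r' -> target r' ->
  exists r, rtc t r /\ R0 r r'.
Proof.
  induction n; intros t t' r' H Hs Ht.
  - inversion Hs; subst. exists t; split. apply rt_refl. eapply RB_target; eauto.
  - inversion Hs as [|? ? t1 ? Hst Hrest]; subst.
    apply step_iff in Hst as (E&r0&r1&->&->&Hr).
    destruct (OSB (S (esize E)) E ltac:(lia) r0 r1 Hr t H) as (t1&Hs1&H1).
    destruct (IHn _ _ r' H1 Hrest Ht) as (r&Hr'&HR).
    exists r; split; auto. eapply rt_trans; eauto.
Qed.

Lemma R0_fill : forall C t t', R0 t t' -> R0 (fill C t) (fill C t').
Proof.
  induction C; intros; simpl; auto.
  - unfold nlam, close. constructor. apply R0_close; auto.
  - unfold nshift, close. constructor. apply R0_close; auto.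
Qed.

Lemma is_value_val : forall t, is_value t <-> is_val t.
Proof.
  split. intros [v ->]; apply is_val_val. intros H; destruct (is_val_ex _ H) as [v ->]; exists v; auto.
Qed.

Lemma ctx_part : forall T0 T1, R0 T0 T1 ->
  (evals_to_value T0 <-> evals_to_value T1) /\
  (evals_to_control_stuck T0 <-> evals_to_control_stuck T1).
Proof.
  intros T0 T1 HR. split; split.
  - intros (r & [Hrt Hirr] & Hv). apply is_value_val in Hv.
    destruct (rt_nsteps _ _ Hrt) as [n Hn].
    destruct (FW n n 0 T0 T1 r ltac:(lia) (RF_0 _ _ _ HR) Hn (or_introl Hv)) as (r'&Hr'&HR').
    assert (Hv' : is_val r') by (eapply R0_val; eauto).
    exists r'; split. split; auto. apply val_irred; auto. apply is_value_val; auto.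
  - intros (r' & [Hrt Hirr] & Hv). apply is_value_val in Hv.
    destruct (rt_nsteps _ _ Hrt) as [n Hn].
    destruct (BW n T0 T1 r' (RB_0 _ _ HR) Hn (or_introl Hv)) as (r&Hr&HR').
    assert (Hv' : is_val r) by (eapply R0_val'; eauto).
    exists r; split. split; auto. apply val_irred; auto. apply is_value_val; auto.
  - intros (r & [Hrt Hirr] & (F&b&->)).
    destruct (rt_nsteps _ _ Hrt) as [n Hn].
    destruct (FW n n 0 T0 T1 _ ltac:(lia) (RF_0 _ _ _ HR) Hn (or_intror (ex_intro _ F (ex_intro _ b eq_refl)))) as (r'&Hr'&HR').
    destruct (R0_cs _ _ _ HR') as (F'&b'&->&_).
    exists (plugF F' (shift b')); split. split; auto. apply cs_irred. exists F', b'; auto.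
  - intros (r' & [Hrt Hirr] & (F&b&->)).
    destruct (rt_nsteps _ _ Hrt) as [n Hn].
    destruct (BW n T0 T1 _ (RB_0 _ _ HR) Hn (or_intror (ex_intro _ F (ex_intro _ b eq_refl)))) as (r&Hr&HR').
    destruct (R0_cs' _ _ _ HR') as (F'&b'&->&_).
    exists (plugF F' (shift b')); split. split; auto. apply cs_irred. exists F', b'; auto.
Qed.

Ltac irr_tac :=
  repeat match goal with
  | H : _ = _ |- _ => solve [discriminate H]
  | H : _ = plugE ?E _ |- _ => is_var E; destruct E; simpl in H; try discriminate
  | H : plugE ?E _ = _ |- _ => is_var E; destruct E; simpl in H; try discriminate
  | H : _ = plugF ?F _ |- _ => is_var F; destruct F; simpl in H; try discriminate
  | H : plugF ?F _ = _ |- _ => is_var F; destruct F; simpl in H; try discriminate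
  | H : _ = val_term ?v |- _ => is_var v; destruct v; simpl in H; try discriminate
  | H : val_term ?v = _ |- _ => is_var v; destruct v; simpl in H; try discriminate
  | H : app _ _ = app _ _ |- _ => injection H; clear H; intros
  | H : reset _ = reset _ |- _ => injection H; clear H; intros
  | H : shift _ = shift _ |- _ => injection H; clear H; intros
  | H : fvar _ = fvar _ |- _ => injection H; clear H; intros
  | H : rstep _ _ |- _ => destruct H as [(?&?&?&?&?)|[(?&?&?&?)|(?&?&?&?)]]
  | H : ?a = _ |- _ => is_var a; subst a
  | H : _ = ?a |- _ => is_var a; subst a
  | H : is_val _ |- _ => simpl in H; contradiction
  end.

Lemma irr_test : forall x z, irreducible (reset (app (fvar z) (app (reset (app (fvar x) I0)) S0))).
Proof.
  intros x z t1 Hs. apply step_iff in Hs as (E&r&r1&Heq&_&Hr). unfold S0, I0 in *. irr_tac.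
Qed.

Lemma irr_t0 : forall x, irreducible (reset (app (reset (app (fvar x) I0)) S0)).
Proof. intros x t1 Hs. apply step_iff in Hs as (E&r&r1&Heq&_&Hr). unfold S0, I0 in *. irr_tac. Qed.

Lemma irr_t1 : forall x, irreducible (reset (app (reset (app (fvar x) I0))
                       (app (reset (app (fvar x) I0)) S0))).
Proof. intros x t1 Hs. apply step_iff in Hs as (E&r&r1&Heq&_&Hr). unfold S0, I0 in *. irr_tac. Qed.

Lemma nlam_id : forall y, nlam y (fvar y) = I0.
Proof. intros. unfold nlam, close. simpl. rewrite Nat.eqb_refl. reflexivity. Qed.

Lemma eval_zS : forall z, eval (reset (app (fvar z) S0)) I0.
Proof.
  intros z. split; [|apply val_irred; simpl; auto].
  eapply rt_trans; apply rt_step.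
  - pose proof (step_shift EHole (FAppR (VVar z) FHole) I0) as Hst. simpl in Hst. exact Hst.
  - pose proof (step_reset EHole (VLam (bvar 0))) as Hst. simpl in Hst. exact Hst.
Qed.

Ltac ctx_tac :=
  repeat match goal with
  | H : _ = _ |- _ => solve [discriminate H]
  | H : _ = ecomp ?E _ |- _ => is_var E; destruct E; simpl in H; try discriminate
  | H : _ = f2e ?F |- _ => is_var F; destruct F; simpl in H; try discriminate
  | H : EReset _ = EReset _ |- _ => injection H; clear H; intros
  | H : EAppL _ _ = EAppL _ _ |- _ => injection H; clear H; intros
  | H : _ = ?a |- _ => is_var a; subst a
  end.

Theorem proposition1 (x k y : atom) (Hxk : x <> k) :
  let i := nlam y (fvar y) in
  let t0 := reset (app (reset (app (fvar x) i)) (nshift k i)) in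
  let t1 := reset (app (reset (app (fvar x) i))
                       (app (reset (app (fvar x) i)) (nshift k i))) in
  ctx_equiv t0 t1 /\ ~ nf_bisimilar t0 t1.
Proof.
  intros i t0 t1. unfold t0, t1, i. rewrite nlam_id.
  change (nshift k I0) with S0. clear t0 t1 i.
  split.
  - intros C _ _ _. apply ctx_part. apply R0_fill. apply R0_base; auto.
  - intros (R & [Hsim _] & HR).
    destruct (Hsim _ _ _ HR (conj (rt_refl _ _ _) (irr_t0 x))) as (t1' & [Ht1 Hirr] & Hnf).
    apply irred_rt in Ht1; [|apply irr_t1]. subst t1'.
    destruct Hnf as [(v0&v1&E0&_)|[(F0&F1&b0&b1&E0&_)|(E0&E1&x'&v0&v1&Eq0&Eq1&Hctx&_)]].
    + destruct v0; discriminate.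
    + destruct F0; discriminate.
    + unfold S0, I0 in Eq0, Eq1. irr_tac.
      destruct Hctx as [(E0'&E1'&F0&F1&Ha&Hb&Hf)|(F0&F1&Ha&_)].
      * ctx_tac.
        destruct (Hf (S x')) as [H1 _]; simpl; [intuition lia | intuition lia |].
        simpl in H1.
        destruct (Hsim _ _ _ H1 (eval_zS (S x'))) as (u & [Hu Hui] & Hn).
        apply irred_rt in Hu; [|apply (irr_test x' (S x'))]. subst u.
        destruct Hn as [(v0&v1&E0&E1&_)|[(F0&F1&b0&b1&E0&_)|(E0&E1&z&v0&v1&Eq0&_)]].
        -- destruct v1; discriminate.
        -- destruct F0; discriminate.
        -- destruct E0; discriminate.
      * destruct F0; discriminate.
Qed.
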